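(* Let $\varepsilon>0$ be a constant, $m=m(n)=n^{1+\varepsilon}$ and $\mu=\mu(n)=n^{-\varepsilon}$. Suppose that for every $n$ there is a matrix $A_n\in\mathbb{F}_2^{m\times n}$ such that there is no family of polynomial-size non-uniform nondeterministic circuits $C:\{0,1\}^m\to\{0,1\}$ that accepts a constant fraction of uniformly random strings in $\{0,1\}^m$ but rejects every string of the form $A_n\vec{s}+\vec{e}$ with $\vec{s}\in\mathbb{F}_2^n$ and $\vec{e}\in\mathbb{F}_2^m$ of Hamming weight at most $\mu m$. Then there exist constants $\varepsilon'>0$, $d\ge2$ and a (non-uniformly computable) family of demi-bits generators $\{g_n:\{0,1\}^n\to\{0,1\}^{n^{1+\varepsilon'}}\}$ secure against $\mathbf{NP}/\mathrm{poly}$ such that each output bit of $g_n$ is computable by a polynomial of degree $d$ over $\mathbb{F}_2$.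
   Context: A family $\{g_n:\{0,1\}^n\to\{0,1\}^{N(n)}\}$ with $N(n)>n$, computable by polynomial-size circuits, is a demi-bits generator secure against $\mathbf{NP}/\mathrm{poly}$ if there is no family of polynomial-size nondeterministic circuits $D$ that accepts a constant fraction of $y\in\{0,1\}^{N}$ while rejecting every $y\in\mathrm{Range}(g_n)$ (for all sufficiently large $n$). *)

(* Defs.v *)
From Stdlib Require Import Reals.
From mathcomp Require Import all_boot all_order all_algebra.
Set Implicit Arguments. Unset Strict Implicit. Unset Printing Implicit Defensive.
Import GRing.Theory.

(** Wires 0..k-1 are the inputs; gate number j produces wire k+j and may only
    read earlier wires (a reference to a non-existing wire reads [false]). *)
Inductive gate : Type :=
| GAnd : nat -> nat -> gate
| GOr  : nat -> nat -> gate
| GNot : nat -> gate.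

Record circuit : Type := Circuit { gates : seq gate; outs : seq nat }.

Definition eval_gate (ws : seq bool) (g : gate) : bool :=
  match g with
  | GAnd i j => nth false ws i && nth false ws j
  | GOr i j => nth false ws i || nth false ws j
  | GNot i => ~~ nth false ws i
  end.

Definition eval_wires (C : circuit) (inp : seq bool) : seq bool :=
  foldl (fun ws g => rcons ws (eval_gate ws g)) inp (gates C).

Definition eval_out (C : circuit) (inp : seq bool) : seq bool :=
  [seq nth false (eval_wires C inp) i | i <- outs C].

Definition csize (C : circuit) : nat := size (gates C).

Record ndcircuit : Type := NDCircuit { ndc : circuit; wlen : nat }.

Definition nd_accepts (D : ndcircuit) (x : seq bool) : bool :=
  [exists y : (wlen D).-tuple bool, eval_out (ndc D) (x ++ y) == [:: true]].

Definition nd_size (D : ndcircuit) : nat := csize (ndc D) + wlen D.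

Definition nd_breaks (N : nat -> nat) (Bad : forall n, (N n).-tuple bool -> Prop)
  : Prop :=
  exists (c : nat) (delta : R) (D : nat -> ndcircuit),
    Rlt R0 delta /\
    exists n0 : nat, forall n : nat, (n0 <= n)%N ->
      (nd_size (D n) <= c * n ^ c + c)%N /\
      Rle (Rmult delta (pow (INR 2) (N n))) (INR #|[set y : (N n).-tuple bool | nd_accepts (D n) y]|) /\
      (forall y : (N n).-tuple bool, Bad n y -> ~~ nd_accepts (D n) y).

Definition poly_circuit_computable (N : nat -> nat)
  (g : forall n, n.-tuple bool -> (N n).-tuple bool) : Prop :=
  exists (c : nat) (C : nat -> circuit), forall n : nat,
    (csize (C n) <= c * n ^ c + c)%N /\
    forall x : n.-tuple bool, eval_out (C n) x = val (g n x).

Definition demibits_generator_NPpoly (N : nat -> nat)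
  (g : forall n, n.-tuple bool -> (N n).-tuple bool) : Prop :=
  (exists n0 : nat, forall n : nat, (n0 <= n)%N -> (n < N n)%N) /\
  poly_circuit_computable g /\
  ~ nd_breaks (fun n y => exists x : n.-tuple bool, y = g n x).

(** * Degree-d F_2 polynomials on bits.  Over F_2 and 0/1 inputs every
    polynomial of degree <= d equals a multilinear one of degree <= d, i.e. a
    XOR of monomials (ANDs of at most d variables). *)
Definition f2poly_deg_le (n d : nat) (f : n.-tuple bool -> bool) : Prop :=
  exists P : {set {set 'I_n}},
    (forall S, S \in P -> (#|S| <= d)%N) /\
    forall x : n.-tuple bool,
      f x = odd #|[set S in P | [forall i in S, tnth x i]]|.

Definition rpow_len (a : R) (n : nat) : nat :=
  Z.to_nat (Int_part (Rpower (INR n) a)).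

Definition bits_of_cV (k : nat) (v : 'cV['F_2]_k) : k.-tuple bool :=
  [tuple v i ord0 != 0%R | i < k].

Definition hweight (k : nat) (v : 'cV['F_2]_k) : nat := #|[set i | v i ord0 != 0%R]|.

Definition lpn_strings (eps : R) (A : forall n, 'M['F_2]_(rpow_len (Rplus R1 eps) n, n))
  (n : nat) (y : (rpow_len (Rplus R1 eps) n).-tuple bool) : Prop :=
  exists (s : 'cV['F_2]_n) (e : 'cV['F_2]_(rpow_len (Rplus R1 eps) n)),
    Rle (INR (hweight e)) (Rmult (Rpower (INR n) (Ropp eps)) (INR (rpow_len (Rplus R1 eps) n))) /\
    y = bits_of_cV (A n *m s + e).

(* Main.v *)
Require Import Defs.
From Stdlib Require Import Reals.
From mathcomp Require Import all_boot all_order all_algebra.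
From Stdlib Require Import Lra Lia.
From mathcomp Require Import zify.


Section Real1Sec.
Local Open Scope R_scope.
Definition fl (r : R) : nat := Z.to_nat (Int_part r).

Lemma fl_le {r} : (0 <= r) -> (INR (fl r) <= r).
Proof.
move=> r0; rewrite /fl; have [h1 h2] := base_Int_part r.
have hz : Z.le 0 (Int_part r).
  have : (-1 < IZR (Int_part r)) by lra.
  move/lt_IZR. lia.
rewrite INR_IZR_INZ Znat.Z2Nat.id //.
Qed.

Lemma fl_ge (t : nat) r : (INR t <= r) -> (t <= fl r)%N.
Proof.
move=> h; rewrite /fl; have [h1 h2] := base_Int_part r.
have : (IZR (Z.of_nat t) - 1 < IZR (Int_part r)) by rewrite -INR_IZR_INZ; lra.
rewrite -minus_IZR => /lt_IZR hz.
apply/leP; lia.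
Qed.

Lemma Rpower0 a : Rpower 0 a = R1.
Proof.
rewrite /Rpower /ln.
destruct (Rlt_dec 0 0) as [h|h]; first by case: (Rlt_irrefl _ h).
rewrite Rmult_0_r exp_0. reflexivity.
Qed.

Lemma Rpower_pos x a : (0 < Rpower x a).
Proof. rewrite /Rpower; apply: exp_pos. Qed.

Lemma INR_pos {n : nat} : (0 < n)%N -> (0 < INR n).
Proof. by move=> h; apply: lt_0_INR; apply/ltP. Qed.

Lemma natpowE (a b : nat): Nat.pow a b = expn a b.
Proof. elim: b => //= b ->. by rewrite expnS. Qed.

Lemma INR_ge1 {n : nat} : (0 < n)%N -> 1 <= INR n.
Proof. move/leP => h; have := le_INR 1 n h; simpl; lra. Qed.

Lemma RP {a b e1 e2 q : nat} : (0 < a)%N -> (0 < b)%N -> (0 < q)%N -> (a ^ e1 <= b ^ e2)%N ->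
  (Rpower (INR a) (INR e1 / INR q) <= Rpower (INR b) (INR e2 / INR q)).
Proof.
move=> a0 b0' q0 h.
have Ha := INR_pos a0; have Hb := INR_pos b0'.
rewrite /Rdiv -!Rpower_mult !Rpower_pow //.
apply: Rle_Rpower_l; first by left; apply: Rinv_0_lt_compat; apply: INR_pos.
split; first by apply: pow_lt.
rewrite -!pow_INR. apply: le_INR. apply/leP. by rewrite !natpowE.
Qed.

Lemma fl_mono r1 r2 : 0 <= r1 -> r1 <= r2 -> (fl r1 <= fl r2)%N.
Proof. move=> h0 h; apply: fl_ge; have := fl_le h0; lra. Qed.

Lemma fl_leN r (t : nat) : 0 <= r -> r <= INR t -> (fl r <= t)%N.
Proof. move=> h0 h; apply/leP; apply: INR_le; have := fl_le h0; lra. Qed.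

Lemma rpow_lenE a n : rpow_len a n = fl (Rpower (INR n) a).
Proof. by []. Qed.

Lemma qfrac (q : nat) : (0 < q)%N -> INR q.+1 / INR q = R1 + / INR q.
Proof. move=> q0; have := INR_pos q0 => h. rewrite S_INR; field; lra. Qed.

Lemma N_upper (q n : nat) : (0 < q)%N -> (rpow_len (Rplus R1 (/ INR q)) n <= n ^ 2 + 1)%N.
Proof.
move=> q0; rewrite rpow_lenE.
case: n => [|n].
  rewrite /= Rpower0. apply/leP. apply: INR_le. have := @fl_le R1 ltac:(lra). simpl; lra.
have hn : 0 < INR n.+1 by apply: INR_pos.
have hq := INR_pos q0.
apply: fl_leN; first by left; apply: Rpower_pos. rewrite plus_INR -natpowE pow_INR -Rpower_pow //.
have : Rpower (INR n.+1) (R1 + / INR q) <= Rpower (INR n.+1) (INR 2).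
  apply: Rle_Rpower; first by apply: INR_ge1.
  simpl. have : / INR q <= 1.
    rewrite -Rinv_1; apply: Rinv_le_contravar; [lra| exact: INR_ge1].
  lra.
simpl; lra.
Qed.

Lemma stretch (q n : nat) : (0 < q)%N -> (2 ^ q <= n)%N -> (n < rpow_len (Rplus R1 (/ INR q)) n)%N.
Proof.
move=> q0 hn.
have n0 : (0 < n)%N by apply: leq_trans hn; rewrite expn_gt0.
have key : ((n.+1) ^ q <= n ^ q.+1)%N.
  apply: (@leq_trans ((n + n) ^ q)); first by rewrite leq_exp2r // -addn1 leq_add2l.
  by rewrite addnn -mul2n expnMn expnS leq_mul2r hn orbT.
have := RP (ltn0Sn n) n0 q0 key.
rewrite qfrac // /Rdiv Rinv_r; last by apply: not_0_INR; move=> e; move: q0; rewrite e.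
rewrite Rpower_1; last by apply: INR_pos.
move=> h; rewrite rpow_lenE; apply: fl_ge; exact: h.
Qed.

Lemma trunc_le (eps : R) (p k nd : nat) : (0 < p)%N -> 1 <= INR p * eps ->
  (0 < k)%N -> (0 < nd)%N -> (nd ^ (4 * p).+1 <= k ^ (4 * p + 4))%N ->
  (rpow_len (Rplus R1 (/ INR (4 * p))) nd <= rpow_len (Rplus R1 eps) k)%N.
Proof.
move=> p0 hpe k0 nd0 h.
have q0 : (0 < 4 * p)%N by rewrite muln_gt0.
have := RP nd0 k0 q0 h.
rewrite qfrac //.
have hp := INR_pos p0.
have -> : INR (4 * p + 4) / INR (4 * p) = R1 + / INR p.
  rewrite plus_INR mult_INR; simpl; field; lra.
move=> h1; rewrite !rpow_lenE; apply: fl_mono; first by left; apply: Rpower_pos.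
apply: Rle_trans h1 _; apply: Rle_Rpower; first exact: INR_ge1.
have : / INR p <= eps.
  have e : eps - / INR p = (INR p * eps - 1) * / INR p by field; lra.
  have : 0 <= (INR p * eps - 1) * / INR p.
    apply: Rmult_le_pos; first lra. by left; apply: Rinv_0_lt_compat.
  lra.
lra.
Qed.

Lemma m_upper (eps : R) (B k : nat) : (0 < k)%N -> R1 + eps <= INR B ->
  (rpow_len (Rplus R1 eps) k <= k ^ B)%N.
Proof.
move=> k0 hB; rewrite rpow_lenE; apply: fl_leN; first by left; apply: Rpower_pos.
rewrite -natpowE pow_INR -Rpower_pow; last exact: INR_pos.
apply: Rle_Rpower => //; exact: INR_ge1.
Qed.

Lemma w_upper (eps : R) (k w : nat) : (0 < k)%N ->
  INR w <= Rpower (INR k) (- eps) * INR (rpow_len (Rplus R1 eps) k) -> (w <= k)%N.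
Proof.
move=> k0 h; apply/leP; apply: INR_le; apply: Rle_trans h _.
have hk := INR_pos k0.
have h1 := @fl_le (Rpower (INR k) (R1 + eps)) (Rlt_le _ _ (Rpower_pos _ _)).
apply: Rle_trans (Rmult_le_compat_l _ _ _ (Rlt_le _ _ (Rpower_pos _ _)) h1) _.
rewrite -Rpower_plus.
have -> : - eps + (R1 + eps) = 1 by ring.
rewrite Rpower_1 //; lra.
Qed.

End Real1Sec.

Set Implicit Arguments. Unset Strict Implicit. Unset Printing Implicit Defensive.

Definition step (ws : seq bool) (g : gate) := rcons ws (eval_gate ws g).
Definition exec (ws : seq bool) (gs : seq gate) := foldl step ws gs.

Arguments exec : simpl never.
Arguments step : simpl never.

Lemma exec_cat ws g1 g2 : exec ws (g1 ++ g2) = exec (exec ws g1) g2.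
Proof. by rewrite /exec foldl_cat. Qed.

Lemma exec_cons ws g gs : exec ws (g :: gs) = exec (step ws g) gs.
Proof. by []. Qed.

Lemma size_exec ws gs : size (exec ws gs) = size ws + size gs.
Proof.
elim: gs ws => [|g gs IH] ws /=; first by rewrite addn0.
by rewrite exec_cons IH size_rcons addSnnS.
Qed.

Lemma nth_exec ws gs i : i < size ws -> nth false (exec ws gs) i = nth false ws i.
Proof.
elim: gs ws => [|g gs IH] ws //= hi.
rewrite exec_cons IH; last by rewrite size_rcons ltnS ltnW.
by rewrite /step nth_rcons hi.
Qed.

Lemma nth_step_last ws g : nth false (step ws g) (size ws) = eval_gate ws g.
Proof. by rewrite /step nth_rcons ltnn eqxx. Qed.

Definition evbit (x : seq bool) (ms : seq (seq nat)) : bool :=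
  foldr (fun mo b => all (nth false x) mo (+) b) false ms.

Fixpoint andch (t : nat) (mo : seq nat) : seq gate :=
  match mo with [::] => [::] | v :: mo' => GAnd t v :: andch t.+1 mo' end.

Definition xor4 (a c1 : nat) : seq gate :=
  [:: GOr a c1.-1; GAnd a c1.-1; GNot c1.+1; GAnd c1 c1.+2].

Fixpoint aux (c : nat) (ms : seq (seq nat)) : seq gate :=
  match ms with
  | [::] => [::]
  | mo :: ms' => (GNot c :: andch c mo) ++ xor4 c.-1 (c + (size mo).+1) ++ aux (c + (size mo).+1 + 4) ms'
  end.

Definition bit_gates (c : nat) (ms : seq (seq nat)) : seq gate := GAnd c c :: aux c.+1 ms.

Fixpoint comp (c : nat) (bs : seq (seq (seq nat))) : seq gate * seq nat :=
  match bs with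
  | [::] => ([::], [::])
  | ms :: bs' => let gb := bit_gates c ms in let c' := c + size gb in
                 let r := comp c' bs' in (gb ++ r.1, c'.-1 :: r.2)
  end.

Arguments bit_gates : simpl never.
Definition cost (ms : seq (seq nat)) : nat := (sumn [seq size mo + 5 | mo <- ms]).+1.

Lemma size_andch t mo : size (andch t mo) = size mo.
Proof. by elim: mo t => //= v mo IH t; rewrite IH. Qed.

Lemma size_aux c ms : size (aux c ms) = sumn [seq size mo + 5 | mo <- ms].
Proof.
elim: ms c => //= mo ms IH c.
rewrite !size_cat /= size_andch IH. lia.
Qed.

Lemma size_bit c ms : size (bit_gates c ms) = cost ms.
Proof. by rewrite /bit_gates /= size_aux. Qed.

Lemma size_comp c bs : size (comp c bs).1 = sumn [seq cost ms | ms <- bs].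
Proof.
elim: bs c => //= ms bs IH c.
by rewrite size_cat IH size_aux /cost addSn.
Qed.

Section Correct.
Variables (n : nat) (x : seq bool).
Hypothesis sx : size x = n.
Definition inv (ws : seq bool) := n <= size ws /\ forall v, v < n -> nth false ws v = nth false x v.

Lemma inv_exec ws gs : inv ws -> inv (exec ws gs).
Proof.
move=> [h1 h2]; split; first by rewrite size_exec; apply: leq_trans h1 (leq_addr _ _).
by move=> v hv; rewrite nth_exec ?h2 //; apply: leq_trans hv h1.
Qed.

Lemma andch_ok mo ws t : inv ws -> size ws = t.+1 -> all (fun v => v < n) mo ->
  nth false (exec ws (andch t mo)) (t + size mo) = nth false ws t && all (nth false x) mo.
Proof.
elim: mo ws t => [|v mo IH] ws t hi hs /= hmo; first by rewrite addn0 andbT.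
move/andP: hmo => [hv hmo].
rewrite exec_cons addnS -addSn IH //; first last.
- by rewrite /step size_rcons hs.
- exact: (@inv_exec ws [:: GAnd t v] hi).
rewrite -hs nth_step_last /= (proj2 hi v hv). by rewrite andbA.
Qed.

Lemma xor4_ok ws a c1 : size ws = c1 -> a < c1 -> 0 < c1 ->
  nth false (exec ws (xor4 a c1)) c1.+3 = nth false ws a (+) nth false ws c1.-1.
Proof.
move=> hs ha h0.
have hb : c1.-1 < c1 by rewrite ltn_predL.
rewrite /xor4 !exec_cons /exec /=.
set u1 := step ws (GOr a c1.-1).
have s1 : size u1 = c1.+1 by rewrite /u1 /step size_rcons hs.
have n1 : forall i, i < c1 -> nth false u1 i = nth false ws i.
  by move=> i hi; rewrite /u1 /step nth_rcons hs hi.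
have v1 : nth false u1 c1 = nth false ws a || nth false ws c1.-1.
  by have := nth_step_last ws (GOr a c1.-1); rewrite hs.
set u2 := step u1 (GAnd a c1.-1).
have s2 : size u2 = c1.+2 by rewrite /u2 /step size_rcons s1.
have n2 : forall i, i < c1.+1 -> nth false u2 i = nth false u1 i.
  by move=> i hi; rewrite /u2 /step nth_rcons s1 hi.
have v2 : nth false u2 c1.+1 = nth false ws a && nth false ws c1.-1.
  by have := nth_step_last u1 (GAnd a c1.-1); rewrite s1 => ->; rewrite /= !n1.
set u3 := step u2 (GNot c1.+1).
have s3 : size u3 = c1.+3 by rewrite /u3 /step size_rcons s2.
have n3 : forall i, i < c1.+2 -> nth false u3 i = nth false u2 i.
  by move=> i hi; rewrite /u3 /step nth_rcons s2 hi.
have v3 : nth false u3 c1.+2 = ~~ (nth false ws a && nth false ws c1.-1).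
  by have := nth_step_last u2 (GNot c1.+1); rewrite s2 => ->; rewrite /= v2.
have := nth_step_last u3 (GAnd c1 c1.+2); rewrite s3 => ->; rewrite /= v3 n3 // n2 // v1.
by case: (nth false ws a); case: (nth false ws c1.-1).
Qed.

Lemma aux_ok ms ws c : inv ws -> size ws = c -> 0 < c ->
  (forall mo, mo \in ms -> all (fun v => v < n) mo) ->
  nth false (exec ws (aux c ms)) (size (exec ws (aux c ms))).-1 =
    nth false ws c.-1 (+) evbit x ms.
Proof.
elim: ms ws c => [|mo ms IH] ws c hi hs c0 hms.
  by rewrite /= /exec /= hs addbF.
have -> : aux c (mo :: ms) = (GNot c :: andch c mo) ++ xor4 c.-1 (c + (size mo).+1) ++ aux (c + (size mo).+1 + 4) ms by [].
rewrite [evbit _ _]/=.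
have hmo := hms mo (mem_head _ _).
set ws1 := exec ws (GNot c :: andch c mo).
have hs1 : size ws1 = c + (size mo).+1 by rewrite size_exec /= size_andch hs.
have hi1 : inv ws1 by apply: inv_exec.
have hv1 : nth false ws1 (c + size mo) = all (nth false x) mo.
  rewrite /ws1 exec_cons andch_ok //.
  - by rewrite -hs nth_step_last /= nth_default // hs.
  - exact: (@inv_exec ws [:: GNot c] hi).
  - by rewrite /step size_rcons hs.
have hlast1 : nth false ws1 (c + (size mo).+1).-1 = all (nth false x) mo by rewrite addnS /=.
have hacc1 : nth false ws1 c.-1 = nth false ws c.-1.
  by rewrite /ws1 nth_exec // hs ltn_predL.
rewrite !exec_cat -/ws1.
set c1 := c + (size mo).+1.
set ws2 := exec ws1 (xor4 c.-1 c1).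
have hs2 : size ws2 = c1 + 4 by rewrite size_exec hs1.
have hi2 : inv ws2 by apply: inv_exec.
have hv2 : nth false ws2 (c1 + 4).-1 = nth false ws c.-1 (+) all (nth false x) mo.
  rewrite /ws2 addn4 /= xor4_ok // ?hacc1 ?hlast1 //; rewrite /c1; lia.
rewrite IH //; last by move=> mo' h; apply: hms; rewrite inE h orbT.
- by rewrite hv2 addbA.
- by rewrite addn4.
Qed.

Lemma bit_ok ws c (ms : seq (seq nat)) : inv ws -> size ws = c ->
  (forall mo, mo \in ms -> all (fun v => v < n) mo) ->
  size (exec ws (bit_gates c ms)) = c + cost ms /\
  nth false (exec ws (bit_gates c ms)) (c + cost ms).-1 = evbit x ms.
Proof.
move=> hi hs hms.
have hsz : size (exec ws (bit_gates c ms)) = c + cost ms by rewrite size_exec size_bit hs.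
split => //.
rewrite -hsz /bit_gates exec_cons.
set ws1 := step ws (GAnd c c).
have hs1 : size ws1 = c.+1 by rewrite /ws1 /step size_rcons hs.
have hi1 : inv ws1 by exact: (@inv_exec ws [:: GAnd c c] hi).
rewrite aux_ok //.
have := nth_step_last ws (GAnd c c); rewrite hs /= => ->.
by rewrite nth_default ?hs.
Qed.

Lemma comp_ok (bs : seq (seq (seq nat))) ws c : inv ws -> size ws = c ->
  (forall ms mo, ms \in bs -> mo \in ms -> all (fun v => v < n) mo) ->
  [seq nth false (exec ws (comp c bs).1) o | o <- (comp c bs).2] = [seq evbit x ms | ms <- bs].
Proof.
elim: bs ws c => [|ms bs IH] ws c hi hs hbs //.
have -> : comp c (ms :: bs) = (bit_gates c ms ++ (comp (c + size (bit_gates c ms)) bs).1,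
   (c + size (bit_gates c ms)).-1 :: (comp (c + size (bit_gates c ms)) bs).2) by [].
rewrite !map_cons.
have hms : forall mo, mo \in ms -> all (fun v => v < n) mo.
  by move=> mo h; apply: (hbs ms) => //; rewrite mem_head.
have [hsz hv] := bit_ok hi hs hms.
rewrite exec_cat size_bit.
have hi1 : inv (exec ws (bit_gates c ms)) by apply: inv_exec.
rewrite nth_exec; last by rewrite hsz /cost addnS.
rewrite hv IH //.
by move=> ms' mo h1 h2; apply: (hbs ms') => //; rewrite inE h1 orbT.
Qed.

End Correct.

Definition compC (n : nat) (bs : seq (seq (seq nat))) : circuit :=
  Circuit (comp n bs).1 (comp n bs).2.

Lemma compC_ok n (bs : seq (seq (seq nat))) (x : seq bool) : size x = n ->
  (forall ms mo, ms \in bs -> mo \in ms -> all (fun v => v < n) mo) ->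
  eval_out (compC n bs) x = [seq evbit x ms | ms <- bs].
Proof.
move=> sx hbs; rewrite /eval_out /eval_wires /=.
have -> : foldl (fun ws g => rcons ws (eval_gate ws g)) x (comp n bs).1 = exec x (comp n bs).1 by [].
apply: (comp_ok sx) => //; split; first by rewrite sx.
by [].
Qed.

Lemma csize_compC n bs : csize (compC n bs) = sumn [seq cost ms | ms <- bs].
Proof. by rewrite /csize size_comp. Qed.

Lemma odd_symdiff (T : finType) (A B : {set T}) :
  odd #|(A :\: B) :|: (B :\: A)| = odd #|A| (+) odd #|B|.
Proof.
rewrite cardsU.
have -> : (A :\: B) :&: (B :\: A) = set0.
  by apply/setP => i; rewrite !inE; case: (i \in A); case: (i \in B).
rewrite cards0 subn0.
rewrite -(cardsID B A) -(cardsID A B) setIC !oddD.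
by case: (odd _); case: (odd _); case: (odd _).
Qed.

Lemma sat_symdiff (T : finType) (A B : {set T}) (P : pred T) :
  [set S in (A :\: B) :|: (B :\: A) | P S] =
  ([set S in A | P S] :\: [set S in B | P S]) :|: ([set S in B | P S] :\: [set S in A | P S]).
Proof.
by apply/setP => S; rewrite !inE; case: (S \in A); case: (S \in B); case: (P S).
Qed.

Definition monoset n (mo : seq nat) : {set 'I_n} := [set i : 'I_n | val i \in mo].

Lemma card_monoset n mo : #|monoset n mo| <= size mo.
Proof.
rewrite cardE -(size_map val).
apply: uniq_leq_size; first by rewrite map_inj_uniq ?enum_uniq //; apply: val_inj.
by move=> v /mapP [i]; rewrite mem_enum inE => h ->.
Qed.

Lemma all_monoset n (x : n.-tuple bool) mo : all (fun v => v < n) mo ->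
  all (nth false x) mo = [forall i in monoset n mo, tnth x i].
Proof.
move=> hmo; apply/allP/forallP => [h i|h v hv].
  apply/implyP; rewrite inE => hi; rewrite (tnth_nth false); exact: h.
have hvn : v < n by move/allP: hmo; apply.
have := h (Ordinal hvn); rewrite inE /= hv /= (tnth_nth false) //.
Qed.

Lemma evbit_deg n d (ms : seq (seq nat)) :
  (forall mo, mo \in ms -> size mo <= d /\ all (fun v => v < n) mo) ->
  f2poly_deg_le d (fun x : n.-tuple bool => evbit x ms).
Proof.
elim: ms => [|mo ms IH] hms.
  exists set0; split => [S|x]; first by rewrite inE.
  rewrite /evbit /=.
  have -> : [set S in (set0 : {set {set 'I_n}}) | [forall i in S, tnth x i]] = set0
     by apply/setP => S; rewrite !inE.
  by rewrite cards0.
have [h1 h2] := hms mo (mem_head _ _).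
have [P [HP HPx]] : f2poly_deg_le d (fun x : n.-tuple bool => evbit x ms).
  by apply: IH => mo' h; apply: hms; rewrite inE h orbT.
set Sm := monoset n mo.
exists ((P :\: [set Sm]) :|: ([set Sm] :\: P)); split.
  move=> S; rewrite !inE => /orP [/andP [_ hS]|/andP [_ /eqP ->]]; first exact: HP.
  exact: leq_trans (card_monoset _ _) h1.
move=> x; rewrite sat_symdiff odd_symdiff -HPx /= addbC.
congr (_ (+) _).
rewrite all_monoset //.
case: (boolP [forall i in Sm, tnth x i]) => hs.
  have -> : [set S in [set Sm] | [forall i in S, tnth x i]] = [set Sm].
    by apply/setP => S; rewrite !inE; case: eqP => // ->.
  by rewrite cards1.
have -> : [set S in [set Sm] | [forall i in S, tnth x i]] = set0.
  apply/setP => S; rewrite !inE; case: eqP => // ->; exact/negbTE.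
by rewrite cards0.
Qed.

Import GRing.Theory.

Section LfSec.
Variable d : nat.
Definition Lf (m : nat) : nat := (find (fun L => m <= L.+1 ^ d) (iota 0 m)).+1.

Lemma Lf_pos m : 0 < Lf m. Proof. by []. Qed.

Hypothesis d0 : 0 < d.

Lemma Lf_ge m : m <= Lf m ^ d.
Proof.
rewrite /Lf; case: (boolP (has (fun L => m <= L.+1 ^ d) (iota 0 m))) => h.
  have hf : find (fun L => m <= L.+1 ^ d) (iota 0 m) < m by move: h; rewrite has_find size_iota.
  by have := nth_find 0 h; rewrite nth_iota ?add0n.
rewrite hasNfind // size_iota.
apply: (@leq_trans m.+1) => //.
by rewrite -{1}(expn1 m.+1) leq_pexp2l.
Qed.

Lemma Lf_min m L : 0 < L -> m <= L ^ d -> Lf m <= L.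
Proof.
move=> L0 hL; rewrite /Lf; case: (ltnP L.-1 (find (fun L => m <= L.+1 ^ d) (iota 0 m))) => h.
  have hs := find_size (fun L => m <= L.+1 ^ d) (iota 0 m).
  rewrite size_iota in hs.
  have := before_find 0 h; rewrite nth_iota; last by apply: leq_trans h hs.
  by rewrite add0n prednK // hL.
by rewrite -(prednK L0) ltnS.
Qed.

Lemma Lf_pred m : (Lf m).-1 ^ d <= m.
Proof.
rewrite /Lf /=.
have hs := find_size (fun L => m <= L.+1 ^ d) (iota 0 m).
case ef: (find _ _) hs => [|f'] hs; first by case: d d0 => // d1 _; rewrite exp0n.
rewrite size_iota in hs.
have : f' < find (fun L => m <= L.+1 ^ d) (iota 0 m) by rewrite ef.
move/(before_find 0); rewrite nth_iota ?add0n //.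
by move/negbT; rewrite -ltnNge => /ltnW.
Qed.

Lemma Lf_mono m1 m2 : m1 <= m2 -> Lf m1 <= Lf m2.
Proof. by move=> h; apply: Lf_min => //; apply: leq_trans h (Lf_ge m2). Qed.
End LfSec.

Definition dig (L i j : nat) := (j %/ L ^ i) %% L.

Lemma evbit_cat x a b : evbit x (a ++ b) = evbit x a (+) evbit x b.
Proof. by elim: a => [|mo a IH] //=; rewrite IH addbA. Qed.

Lemma val_mk n T (f : nat -> T) : val [tuple f (val j) | j < n] = map f (iota 0 n).
Proof. rewrite /= -val_enum_ord. by rewrite -map_comp. Qed.

Lemma digS L i a : dig L i.+1 a = dig L i (a %/ L).
Proof. by rewrite /dig expnS divnMA. Qed.

Lemma dig_inj L e a b : 0 < L -> a < L ^ e -> b < L ^ e ->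
  all (fun i => dig L i a == dig L i b) (iota 0 e) -> a = b.
Proof.
move=> L0; elim: e a b => [|e IH] a b.
  by rewrite expn0 !ltnS !leqn0 => /eqP -> /eqP ->.
move=> ha hb /= /andP [h0 h].
have hq : a %/ L = b %/ L.
  apply: IH.
  - by rewrite ltn_divLR // -expnSr.
  - by rewrite ltn_divLR // -expnSr.
  have e1 : iota 1 e = map (addn 1) (iota 0 e) by rewrite -iotaDl.
  rewrite e1 all_map in h.
  apply/allP => i hi; have := allP h i hi; rewrite /= add1n !digS; done.
move: h0; rewrite /dig expn0 !divn1 => /eqP hr.
by rewrite (divn_eq a L) (divn_eq b L) hq hr.
Qed.

Lemma foldr_xor_eq (T : eqType) (s : seq T) (f g : T -> bool) :
  {in s, f =1 g} -> foldr (fun t b => f t (+) b) false s = foldr (fun t b => g t (+) b) false s.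
Proof.
elim: s => //= a s IH h; rewrite h ?mem_head // IH // => t ht; apply: h; by rewrite inE ht orbT.
Qed.

Lemma xor_iota (js : seq nat) k r : uniq js -> size js <= k ->
  foldr (fun t b => ((t < size js) && (r == nth 0 js t)) (+) b) false (iota 0 k) = (r \in js).
Proof.
move=> hu hk.
rewrite -(subnKC hk) iotaD foldr_cat.
have -> : foldr (fun t b => ((t < size js) && (r == nth 0 js t)) (+) b) false (iota (0 + size js) (k - size js)) = false.
  have gen : forall u st, size js <= st ->
     foldr (fun t b => ((t < size js) && (r == nth 0 js t)) (+) b) false (iota st u) = false.
    elim => // u IH st hst /=.
    rewrite IH; last exact: leq_trans hst (leqnSn _).
    by rewrite ltnNge hst.
  by apply: gen; rewrite add0n.
have -> : foldr (fun t b => ((t < size js) && (r == nth 0 js t)) (+) b) false (iota 0 (size js))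
       = foldr (fun j b => (r == j) (+) b) false (mkseq (nth 0 js) (size js)).
  rewrite /mkseq foldr_map; apply: foldr_xor_eq => t; rewrite mem_iota add0n => /andP [_ ->] //.
rewrite mkseq_nth.
have -> : foldr (fun j b => (r == j) (+) b) false js = odd (count_mem r js).
  elim: {hu hk} js => //= j js ->; rewrite oddD eq_sym; by case: (j == r).
by rewrite count_uniq_mem // oddb.
Qed.

Lemma b2_mul m k (M : 'M['F_2]_(m, k)) (v : 'cV['F_2]_k) r :
  ((M *m v)%R r ord0 != 0%R) = foldr (fun l b => ((M r l != 0%R) && (v l ord0 != 0%R)) (+) b) false (enum 'I_k).
Proof.
have f2add (a b : 'F_2) : ((a + b)%R != 0%R) = (a != 0%R) (+) (b != 0%R).
  by case: a => [[|[|?]]] ?; case: b => [[|[|?]]] ?.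
have f2mul (a b : 'F_2) : ((a * b)%R != 0%R) = (a != 0%R) && (b != 0%R).
  by case: a => [[|[|?]]] ?; case: b => [[|[|?]]] ?.
rewrite mxE.
have -> : (\sum_(l < k) M r l * v l ord0)%R = (\sum_(l <- enum 'I_k) M r l * v l ord0)%R by rewrite big_enum.
elim: (enum 'I_k) => [|l sq IH]; first by rewrite big_nil.
by rewrite big_cons f2add f2mul IH.
Qed.

Section Gen.
Variables (eps : R) (A : forall n, 'M['F_2]_(rpow_len (Rplus R1 eps) n, n)) (q d : nat).

Definition mm k := rpow_len (Rplus R1 eps) k.
Definition LL k := Lf d (mm k).
Definition need k := k * (1 + d * LL k).
Definition Nq n := rpow_len (Rplus R1 (/ INR q)) n.
Definition kof n := find (fun k => need k == n) (iota 0 n.+1).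
Definition special n := (kof n <= n) && (Nq n <= mm (kof n)).
Definition aidx k t i v := k + (t * d + i) * LL k + v.
Definition lin k (row : nat) : seq (seq nat) :=
  if (insub row : option 'I_(mm k)) is Some r then [seq [:: val l] | l <- enum 'I_k & A k r l != 0%R] else [::].
Definition ten k row := [seq [seq aidx k t i (dig (LL k) i row) | i <- iota 0 d] | t <- iota 0 k].
Definition Dm n j := if special n then lin (kof n) (mm (kof n) - Nq n + j) ++ ten (kof n) (mm (kof n) - Nq n + j) else [::].
Definition gen n (x : n.-tuple bool) : (Nq n).-tuple bool := [tuple evbit x (Dm n (val j)) | j < Nq n].

Lemma need_ge k : k <= need k.
Proof. by rewrite /need -{1}(muln1 k) leq_mul2l leq_addr orbT. Qed.

Hypothesis d0 : 0 < d.

Hypothesis eps0 : Rlt R0 eps.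

Lemma mm_mono k : 0 < k -> mm k <= mm k.+1.
Proof.
move=> k0; rewrite /mm !rpow_lenE; apply: fl_mono; first by left; apply: Rpower_pos.
apply: Rle_Rpower_l; first by apply: Rlt_le; apply: Rplus_lt_0_compat => //; apply: Rlt_0_1.
split; first by apply: INR_pos.
by apply: le_INR; apply/leP.
Qed.

Lemma need_lt k : need k < need k.+1.
Proof.
case: k => [|k]; first by rewrite /need mul0n mul1n addnC addn1.
have hL : LL k.+1 <= LL k.+2 by apply: Lf_mono => //; apply: mm_mono.
rewrite /need; apply: (@leq_trans (k.+1 * (1 + d * LL k.+2)).+1).
  by rewrite ltnS leq_mul2l leq_add2l leq_mul2l hL !orbT.
by rewrite ltn_mul2r add1n ltnSn.
Qed.

Lemma need_mono i k : i < k -> need i < need k.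
Proof.
elim: k => // k IH; rewrite ltnS leq_eqVlt => /orP [/eqP ->|h]; first exact: need_lt.
exact: ltn_trans (IH h) (need_lt k).
Qed.

Lemma need_inj i k : need i = need k -> i = k.
Proof.
move=> e; case: (ltngtP i k) => // h.
  by have := need_mono h; rewrite e ltnn.
by have := need_mono h; rewrite e ltnn.
Qed.

Lemma kof_need k : kof (need k) = k.
Proof.
rewrite /kof.
have hk : k \in iota 0 (need k).+1 by rewrite mem_iota /= add0n ltnS need_ge.
have hh : has (fun k' => need k' == need k) (iota 0 (need k).+1).
  by apply/hasP; exists k.
have hf := hh; rewrite has_find size_iota in hf.
have := nth_find 0 hh; rewrite nth_iota // add0n => /eqP /need_inj.
done.
Qed.

Lemma special_need n : special n -> need (kof n) = n.
Proof.
case/andP => h _.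
have hh : has (fun k' => need k' == n) (iota 0 n.+1) by rewrite has_find size_iota.
by have := nth_find 0 hh; rewrite nth_iota // add0n => /eqP.
Qed.
Lemma aidx_lt k t i v : t < k -> i < d -> v < LL k -> aidx k t i v < need k.
Proof.
move=> ht hi hv; rewrite /aidx /need.
set L := LL k.
have h1 : (t * d + i) * L + v < (t * d + i).+1 * L.
  rewrite mulSn [L + _]addnC ltn_add2l. exact: hv.
have h2 : (t * d + i).+1 * L <= (k * d) * L.
  rewrite leq_mul2r; apply/orP; right.
  apply: (@leq_trans (t.+1 * d)); first by rewrite mulSn addnC -addSn leq_add2r.
  by rewrite leq_mul2r ht orbT.
rewrite mulnDr muln1 -addnA ltn_add2l mulnA.
exact: leq_trans h1 h2.
Qed.

Lemma Dm_ok n j mo : mo \in Dm n j -> size mo <= d /\ all (fun v => v < n) mo.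
Proof.
rewrite /Dm; case: ifP => sp //.
have kn : kof n <= n by case/andP: sp.
rewrite mem_cat => /orP [h|h].
  move: h; rewrite /lin; case: insub => [r|] //.
  move=> /mapP [l _ ->]; split => //=.
  by rewrite andbT; apply: leq_trans (ltn_ord l) kn.
move: h => /mapP [t ht ->]; split; first by rewrite size_map size_iota.
apply/allP => v /mapP [i hi ->].
have e := special_need sp; rewrite -[X in _ < X]e; apply: aidx_lt.
- by move: ht; rewrite mem_iota.
- by move: hi; rewrite mem_iota.
- by rewrite /dig ltn_pmod // /LL Lf_pos.
Qed.

Lemma size_Dm n j : size (Dm n j) <= 2 * n.
Proof.
rewrite /Dm; case: ifP => sp //.
have kn : kof n <= n by case/andP: sp.
rewrite size_cat mul2n -addnn; apply: leq_add; last by rewrite /ten size_map size_iota.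
rewrite /lin; case: insub => [r|] //.
rewrite size_map size_filter; apply: leq_trans (count_size _ _) _.
by rewrite size_enum_ord.
Qed.

Lemma f2add (a b : 'F_2) : ((a + b)%R != 0%R) = (a != 0%R) (+) (b != 0%R).
Proof. by case: a => [[|[|?]]] ?; case: b => [[|[|?]]] ?. Qed.
Lemma f2mul (a b : 'F_2) : ((a * b)%R != 0%R) = (a != 0%R) && (b != 0%R).
Proof. by case: a => [[|[|?]]] ?; case: b => [[|[|?]]] ?. Qed.

Lemma evbit_linE x k (r : 'I_(mm k)) :
  evbit x (lin k (val r)) = foldr (fun l b => ((A k r l != 0%R) && nth false x l) (+) b) false (enum 'I_k).
Proof.
rewrite /lin valK.
elim: (enum 'I_k) => //= l sq IH.
by case: (A k r l != 0%R) => /=; rewrite IH // andbT.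
Qed.

Lemma b2_sum k (F : 'I_k -> 'F_2) :
  ((\sum_(l < k) F l)%R != 0%R) = foldr (fun l b => (F l != 0%R) (+) b) false (enum 'I_k).
Proof.
have -> : (\sum_(l < k) F l)%R = (\sum_(l <- enum 'I_k) F l)%R by rewrite big_enum.
elim: (enum 'I_k) => [|l sq IH]; first by rewrite big_nil.
by rewrite big_cons f2add IH.
Qed.

Lemma evbit_tenE x k row (tf : nat -> nat -> nat -> bool) :
  (forall t i v, t < k -> i < d -> v < LL k -> nth false x (aidx k t i v) = tf t i v) ->
  evbit x (ten k row) = foldr (fun t b => all (fun i => tf t i (dig (LL k) i row)) (iota 0 d) (+) b) false (iota 0 k).
Proof.
move=> h; rewrite /ten /evbit foldr_map; apply: foldr_xor_eq => t; rewrite mem_iota add0n => ht /=.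
rewrite all_map; apply: eq_in_all => i; rewrite mem_iota add0n => hi /=.
by apply: h => //; rewrite /dig ltn_pmod // /LL Lf_pos.
Qed.

Lemma val_gen n (x : n.-tuple bool) : val (gen x) = [seq evbit x (Dm n j) | j <- iota 0 (Nq n)].
Proof. by rewrite /gen /= -val_enum_ord -map_comp. Qed.

Lemma cover k (sv : 'cV['F_2]_k) (e : 'cV['F_2]_(mm k)) :
  0 < k -> Nq (need k) <= mm k -> hweight e <= k ->
  exists x : (need k).-tuple bool,
    val (gen x) = drop (mm k - Nq (need k)) (bits_of_cV (A k *m sv + e)%R).
Proof.
move=> k0 hN hw.
have kn : kof (need k) = k := kof_need k.
have sp : special (need k) by rewrite /special kn need_ge hN.
set n := need k in kn sp hN *.
set L := LL k.
have L0 : 0 < L := Lf_pos _ _.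
have hmL : mm k <= L ^ d := Lf_ge d0 _.
set S := [set i : 'I_(mm k) | e i ord0 != 0%R].
set js := [seq val i | i <- enum S].
have hjsu : uniq js by rewrite map_inj_uniq ?enum_uniq //; apply: val_inj.
have hjsw : size js <= k by rewrite size_map -cardE.
have hjsm : forall t, t < size js -> nth 0 js t < mm k.
  move=> t ht; have : nth 0 js t \in js by apply: mem_nth.
  rewrite /js => /mapP [i _ ->]; exact: ltn_ord.
pose xf := fun idx => if idx < k then nth false [seq sv l ord0 != 0%R | l <- enum 'I_k] idx
   else let r := idx - k in ((r %/ L) %/ d < size js) && (r %% L == dig L ((r %/ L) %% d) (nth 0 js ((r %/ L) %/ d))).
have sz : size (mkseq xf n) == n by rewrite size_mkseq.
exists (Tuple sz).
have hx : forall idx, idx < n -> nth false (Tuple sz) idx = xf idx by move=> idx h; rewrite /= nth_mkseq.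
apply: (@eq_from_nth _ false).
  by rewrite val_gen size_map size_iota size_drop size_tuple subKn.
move=> j; rewrite val_gen size_map size_iota => hj.
rewrite (nth_map 0) ?size_iota // nth_iota // add0n nth_drop.
set s := mm k - Nq n.
have hr : s + j < mm k by rewrite /s; lia.
set rr := Ordinal hr.
rewrite /bits_of_cV -[s + j]/(nat_of_ord rr) nth_mktuple.
rewrite /Dm sp kn -/s -[s + j]/(nat_of_ord rr) evbit_cat evbit_linE.
rewrite [in RHS]mxE f2add b2_mul.
congr (_ (+) _).
  apply: foldr_xor_eq => l _; congr (_ && _).
  rewrite hx; last by apply: leq_trans (ltn_ord l) (need_ge k).
  by rewrite /xf ltn_ord (nth_map l) ?size_enum_ord // nth_ord_enum.
rewrite (@evbit_tenE _ _ _ (fun t i v => (t < size js) && (v == dig L i (nth 0 js t)))); last first.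
  move=> t i v ht hi hv; rewrite hx; last by apply: aidx_lt.
  rewrite /xf /aidx -/L -addnA ltnNge leq_addr /= addKn; move: hv; rewrite -/L => hv.
  rewrite divnMDl // (divn_small hv) addn0 modnMDl (modn_small hv).
  by rewrite divnMDl // (divn_small hi) addn0 modnMDl (modn_small hi).
have -> : (e rr ord0 != 0%R) = (val rr \in js).
  by rewrite mem_map ?mem_enum ?inE //; apply: val_inj.
rewrite -(xor_iota (val rr) hjsu hjsw).
apply: foldr_xor_eq => t _ /=.
case ht: (t < size js) => /=; last first.
  apply/allP => /(_ 0); rewrite mem_iota /= add0n d0 => /(_ isT); done.
apply/allP/eqP => [h|->]; last by move=> i _ /=.
apply: (@dig_inj L d) => //; first by apply: leq_trans hmL.
  by apply: leq_trans (hjsm t ht) hmL.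
by apply/allP => i hi; apply: h.
Qed.

End Gen.

Definition shiftg (s : nat) (g : gate) : gate :=
  match g with
  | GAnd i j => GAnd (s + i) (s + j)
  | GOr i j => GOr (s + i) (s + j)
  | GNot i => GNot (s + i)
  end.

Definition shiftC (s : nat) (C : circuit) : circuit :=
  Circuit (map (shiftg s) (gates C)) (map (addn s) (outs C)).

Definition shiftND (s : nat) (D : ndcircuit) : ndcircuit :=
  NDCircuit (shiftC s (ndc D)) (wlen D).

Lemma nth_pre (pre ws : seq bool) i : nth false (pre ++ ws) (size pre + i) = nth false ws i.
Proof. by rewrite nth_cat ltnNge leq_addr /= addKn. Qed.

Lemma exec_shift pre ws gs :
  exec (pre ++ ws) (map (shiftg (size pre)) gs) = pre ++ exec ws gs.
Proof.
elim: gs ws => [|g gs IH] ws //=.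
rewrite !exec_cons -IH; congr exec.
rewrite /step rcons_cat; congr (_ ++ rcons _ _).
by case: g => [i j|i j|i] /=; rewrite !nth_pre.
Qed.

Lemma eval_out_shift pre inp C :
  eval_out (shiftC (size pre) C) (pre ++ inp) = eval_out C inp.
Proof.
rewrite /eval_out /eval_wires /=.
have -> : foldl (fun ws g => rcons ws (eval_gate ws g)) (pre ++ inp) (map (shiftg (size pre)) (gates C))
   = exec (pre ++ inp) (map (shiftg (size pre)) (gates C)) by [].
rewrite exec_shift -map_comp; apply: eq_map => o /=.
by rewrite nth_pre.
Qed.

Lemma nd_size_shift s D : nd_size (shiftND s D) = nd_size D.
Proof. by rewrite /nd_size /csize /= size_map. Qed.

Lemma nd_accepts_shift s D (y : seq bool) : s <= size y ->
  nd_accepts (shiftND s D) y = nd_accepts D (drop s y).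
Proof.
move=> hs; rewrite /nd_accepts /=.
apply: eq_existsb => w.
have hsz : size (take s y) = s by rewrite size_takel.
by rewrite -{1}(cat_take_drop s y) -catA -{1}hsz eval_out_shift.
Qed.

Lemma card_drop (m N s : nat) (P : pred (seq bool)) : m = s + N ->
  2 ^ s * #|[set z : N.-tuple bool | P z]| <= #|[set y : m.-tuple bool | P (drop s y)]|.
Proof.
move=> ->.
set X := setX [set: s.-tuple bool] [set z : N.-tuple bool | P z].
have -> : 2 ^ s * #|[set z : N.-tuple bool | P z]| = #|X|.
  by rewrite cardsX cardsT card_tuple card_bool.
pose f := fun u : s.-tuple bool * N.-tuple bool => cat_tuple u.1 u.2.
have finj : injective f.
  move=> [a1 b1] [a2 b2] /(congr1 val) /= e.
  have e1 : a1 = a2.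
    apply: val_inj => /=; have := congr1 (take s) e.
    by rewrite !take_size_cat ?size_tuple.
  have e2 : b1 = b2.
    apply: val_inj => /=; have := congr1 (drop s) e.
    by rewrite !drop_size_cat ?size_tuple.
  by rewrite e1 e2.
rewrite -(card_imset _ finj); apply: subset_leq_card.
apply/subsetP => y /imsetP [[a b] hab ->]; move: hab.
rewrite in_setX !inE /= => hb.
by rewrite drop_size_cat ?size_tuple.
Qed.

Lemma need_bound (eps : R) (B q k : nat) : 0 < B ->
  mm eps k <= k ^ B -> 0 < k -> (2 * (B * q.+1) + 1) ^ q.+1 <= k ->
  need eps (B * q.+1) k ^ q.+1 <= k ^ (q + 4).
Proof.
move=> B0 hm k0 hK.
set d := B * q.+1.
have d0 : 0 < d by rewrite muln_gt0 B0.
set L := LL eps d k.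
have L0 : 0 < L := Lf_pos _ _.
have hL : L.-1 ^ q.+1 <= k.
  have h1 : L.-1 ^ d <= k ^ B := leq_trans (Lf_pred d0 _) hm.
  by move: h1; rewrite /d mulnC expnM leq_exp2r.
have h2 : 1 + d * L <= (2 * d + 1) * maxn 1 L.-1.
  rewrite -(prednK L0); case: L.-1 => [|l] /=.
    rewrite /maxn /=; lia.
  rewrite (maxn_idPr (ltn0Sn l)). nia.
have h3 : maxn 1 L.-1 ^ q.+1 <= k.
  rewrite /maxn; case: ifP => _ //; by rewrite exp1n.
have -> : q + 4 = q.+1 + 3 by lia.
rewrite /need -/L expnMn (expnD k q.+1 3) -/d.
rewrite leq_mul2l; apply/orP; right.
apply: (@leq_trans (((2 * d + 1) * maxn 1 L.-1) ^ q.+1)).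
  by rewrite leq_exp2r.
rewrite expnMn.
apply: (@leq_trans (k * k)).
  by apply: leq_mul.
have -> : k ^ 3 = k * k * k by rewrite !expnS expn0 muln1 mulnA.
nia.
Qed.

Lemma nat_above (r : R) : exists t : nat, Rle r (INR t).
Proof.
have [h1 h2] := archimed r.
exists (Z.to_nat (up r)).
case: (Z.le_gt_cases 0 (up r)) => hz.
  rewrite INR_IZR_INZ Znat.Z2Nat.id //; lra.
have : Rlt (IZR (up r)) 0 by apply: IZR_lt.
have := pos_INR (Z.to_nat (up r)); lra.
Qed.

Lemma sumn_le (s : seq nat) (f : nat -> nat) b : (forall x, x \in s -> f x <= b) ->
  sumn (map f s) <= size s * b.
Proof.
elim: s => //= x s IH h; rewrite mulSn; apply: leq_add; first by apply: h; rewrite mem_head.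
by apply: IH => y hy; apply: h; rewrite inE hy orbT.
Qed.

Lemma sumn_le2 (T : eqType) (s : seq T) (f : T -> nat) b : (forall x, x \in s -> f x <= b) ->
  sumn (map f s) <= size s * b.
Proof.
elim: s => //= x s IH h; rewrite mulSn; apply: leq_add; first by apply: h; rewrite mem_head.
by apply: IH => y hy; apply: h; rewrite inE hy orbT.
Qed.

Lemma poly_bound (n d : nat) : (n ^ 2 + 1) * (2 * n * (d + 5) + 1) <= 6 * (d + 5) * n ^ (6 * (d + 5)) + 6 * (d + 5).
Proof.
case: n => [|n]; first by rewrite exp0n //= muln0 mul0n; lia.
set c := 6 * (d + 5).
have h3 : n.+1 ^ 3 <= n.+1 ^ c by apply: leq_pexp2l => //; rewrite /c; lia.
apply: leq_trans (leq_addr _ _).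
apply: (@leq_trans (c * n.+1 ^ 3)); last by rewrite leq_mul2l h3 orbT.
have -> : n.+1 ^ 3 = n.+1 * n.+1 * n.+1 by rewrite !expnS expn0 muln1 mulnA.
have -> : n.+1 ^ 2 = n.+1 * n.+1 by rewrite !expnS expn0 muln1.
rewrite /c; nia.
Qed.

Theorem factB3 :
  forall (eps : R) (A : forall n : nat, 'M['F_2]_(rpow_len (Rplus R1 eps) n, n)),
    Rlt R0 eps ->
    ~ nd_breaks (lpn_strings A) ->
    exists (eps' : R) (d : nat)
           (g : forall n : nat, n.-tuple bool -> (rpow_len (Rplus R1 eps') n).-tuple bool),
      Rlt R0 eps' /\ (2 <= d)%N /\
      demibits_generator_NPpoly g /\
      (forall (n : nat) (i : 'I_(rpow_len (Rplus R1 eps') n)),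
          f2poly_deg_le d (fun x => tnth (g n x) i)).
Proof.
move=> eps A eps0 Hlpn.
have [t1 ht1] := nat_above (Rinv eps).
set p := t1.+1.
have p0 : 0 < p by [].
have hpe : Rle R1 (Rmult (INR p) eps).
  have h : Rle (Rinv eps) (INR p) by rewrite /p S_INR; lra.
  have e1 : R1 = Rmult (Rinv eps) eps by field; lra.
  rewrite e1; apply: Rmult_le_compat_r => //; lra.
have [t2 ht2] := nat_above (Rplus R1 eps).
set B := t2.+2.
have hB : Rle (Rplus R1 eps) (INR B) by rewrite /B !S_INR; have := pos_INR t2; lra.
have B0 : 0 < B by [].
set q := 4 * p.
have q0 : 0 < q by rewrite muln_gt0.
set d := B * q.+1.
have d0 : 0 < d by rewrite muln_gt0 B0.
exists (Rinv (INR q)), d, (gen A q d).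
split; first by apply: Rinv_0_lt_compat; apply: INR_pos.
split; first by rewrite /d /B; nia.
have Dok : forall n j mo, mo \in Dm A q d n j -> size mo <= d /\ all (fun v => v < n) mo.
  by move=> n j mo; apply: Dm_ok.
split; last first.
  move=> n i.
  have [P [h1 h2]] : f2poly_deg_le d (fun x : n.-tuple bool => evbit x (Dm A q d n i)).
    by apply: evbit_deg => mo h; apply: (Dok n i).
  by exists P; split => // x; rewrite -h2 /gen tnth_mktuple.
split.
  exists (2 ^ q) => n hn; exact: stretch.
split.
  exists (6 * (d + 5)), (fun n => compC n [seq Dm A q d n j | j <- iota 0 (Nq q n)]).
  move=> n; split.
    rewrite csize_compC -map_comp.
    apply: leq_trans (poly_bound n d).
    apply: (@leq_trans (Nq q n * (2 * n * (d + 5) + 1))).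
      rewrite -{2}(size_iota 0 (Nq q n)); apply: sumn_le => j _ /=.
      rewrite /cost addn1 ltnS.
      apply: (@leq_trans (size (Dm A q d n j) * (d + 5))).
        apply: sumn_le2 => mo h; rewrite leq_add2r; exact: (proj1 (Dok n j mo h)).
      by rewrite leq_mul2r size_Dm orbT.
    by rewrite leq_mul2r N_upper // orbT.
  move=> x; rewrite val_gen compC_ok ?size_tuple //.
    by rewrite -map_comp.
  move=> ms mo /mapP [j _ ->] h; exact: (proj2 (Dok n j mo h)).
move=> [c [delta [D [delta0 [n0 HD]]]]].
apply: Hlpn.
set K0 := (2 * d + 1) ^ q.+1.
exists (4 * c), delta, (fun k => shiftND (mm eps k - Nq q (need eps d k)) (D (need eps d k))).
split => //.
exists (maxn (maxn K0 n0) 1) => k hk.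
have k0 : 0 < k by move: hk; rewrite !geq_max => /andP [_ ->].
have hK0 : K0 <= k by move: hk; rewrite !geq_max => /andP [/andP [-> _] _].
have hn0 : n0 <= need eps d k.
  apply: leq_trans (need_ge _ _ _); by move: hk; rewrite !geq_max => /andP [/andP [_ ->] _].
have hm : mm eps k <= k ^ B by apply: m_upper.
have hnb : need eps d k ^ q.+1 <= k ^ (q + 4) by apply: need_bound.
have hnd0 : 0 < need eps d k by apply: leq_trans k0 (need_ge _ _ _).
have hN : Nq q (need eps d k) <= mm eps k by apply: trunc_le.
have hnk : need eps d k <= k ^ 4.
  rewrite -(@leq_exp2r _ _ q.+1) // -expnM.
  apply: leq_trans hnb _; apply: leq_pexp2l => //; lia.
have [Hsz [Hacc Hrej]] := HD _ hn0.
set n := need eps d k in hn0 hnb hnd0 hN hnk Hsz Hacc Hrej *.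
set s := mm eps k - Nq q n.
split.
  rewrite nd_size_shift; apply: leq_trans Hsz _.
  have h1 : n ^ c <= k ^ (4 * c).
    by rewrite expnM; case: (c) => // c'; rewrite leq_exp2r.
  have h2 : c <= 4 * c by rewrite leq_pmull.
  by apply: leq_add => //; apply: leq_mul.
have hsm : mm eps k = s + Nq q n by rewrite /s subnK.
split.
  change (Rle (Rmult delta (pow (INR 2) (mm eps k)))
     (INR #|[set y : (mm eps k).-tuple bool | nd_accepts (shiftND s (D n)) y]|)).
  have ecard : #|[set y : (mm eps k).-tuple bool | nd_accepts (shiftND s (D n)) y]| =
       #|[set y : (mm eps k).-tuple bool | nd_accepts (D n) (drop s y)]|.
    by apply: eq_card => y; rewrite !inE nd_accepts_shift // size_tuple /s leq_subr.
  rewrite ecard.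
  have hc := card_drop (nd_accepts (D n)) hsm.
  move/leP: hc => hc; have hc2 := le_INR _ _ hc; apply: Rle_trans hc2.
  rewrite mult_INR -natpowE pow_INR {1}hsm pow_add.
  have h2 : Rle 0 (pow (INR 2) s) by apply: pow_le; apply: pos_INR.
  have -> : Rmult delta (Rmult (pow (INR 2) s) (pow (INR 2) (Nq q n))) =
            Rmult (pow (INR 2) s) (Rmult delta (pow (INR 2) (Nq q n))) by ring.
  by apply: Rmult_le_compat_l.
move=> y [sv [e [hw ->]]].
have hw' : hweight e <= k := @w_upper eps k _ k0 hw.
have [x hx] := cover A d0 eps0 sv k0 hN hw'.
rewrite nd_accepts_shift; last by rewrite size_tuple /s leq_subr.
rewrite -/s -hx.
by apply: Hrej; exists x.
Qed.
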